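(* Let $H$ be a $d\times d$ Hermitian matrix with eigendecomposition $H=U\,\mathrm{diag}(\mathbf{q})\,U^\dagger$, where $U$ is unitary and $\mathbf{q}\in\mathbb{R}^d$, and let $t\ge 1/d$. Then $$\min_{\rho\in S^t}\|\rho-H\|_2^2=\min_{\mathbf{p}\in P(t)}\|\mathbf{p}-\mathbf{q}\|_2^2,$$ and if $\mathbf{p}^*$ is a minimizer of the right-hand side then $U\,\mathrm{diag}(\mathbf{p}^* )\,U^\dagger$ is a minimizer of the left-hand side.
   Context: $\|A\|_2=\sqrt{\mathrm{Tr}(A^\dagger A)}$ is the Frobenius norm and $\|\mathbf{x}\|_2$ the Euclidean norm. $S^t=\{\rho\succeq 0,\ \mathrm{Tr}\rho=1,\ \mathrm{Tr}(\rho^2)\le t\}$ (on $\mathbb{C}^d$). $P(t)=\{\mathbf{p}\in\mathbb{R}^d:\mathbf{p}\ge0,\ \sum_i\mathbf{p}_i=1,\ \mathbf{p}\cdot\mathbf{p}\le t\}$. *)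

(* Defs.v *)
From mathcomp Require Import all_boot all_order all_algebra.
From mathcomp Require Import reals.
From mathcomp.real_closed Require Import complex.
From mathcomp Require Export spectral.

Set Implicit Arguments.
Unset Strict Implicit.
Unset Printing Implicit Defensive.

Import Order.TTheory GRing.Theory Num.Theory.
Local Open Scope ring_scope.
Local Open Scope sesquilinear_scope.

Section Defs.
Variable R : realType.
Local Notation C := R[i].

Definition adj_mx (m n : nat) (A : 'M[C]_(m, n)) : 'M[C]_(n, m) := A ^t*.

Definition is_hermitian (d : nat) (A : 'M[C]_d) : Prop := adj_mx A = A.

Definition psd (d : nat) (A : 'M[C]_d) : Prop :=
  is_hermitian A /\ forall x : 'rV[C]_d, 0 <= (x *m A *m adj_mx x) 0 0.

(* squared Frobenius norm ||A||_2^2 = Tr(A^dagger A) (a complex number that is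
   real and nonnegative) *)
Definition frob2 (d : nat) (A : 'M[C]_d) : C := \tr (adj_mx A *m A).

Definition St (d : nat) (t : R) (rho : 'M[C]_d) : Prop :=
  psd rho /\ \tr rho = 1 /\ \tr (rho *m rho) <= (t%:C)%C.

Definition eucl2 (d : nat) (x : 'rV[R]_d) : R := \sum_(i < d) x 0 i ^+ 2.

Definition Pt (d : nat) (t : R) (p : 'rV[R]_d) : Prop :=
  (forall i, 0 <= p 0 i) /\ \sum_(i < d) p 0 i = 1 /\ eucl2 p <= t.

Definition cdiag (d : nat) (x : 'rV[R]_d) : 'M[C]_d :=
  diag_mx (map_mx (fun r => (r%:C)%C) x).

Definition is_minimizer (T : Type) (V : porderType ring_display)
    (A : T -> Prop) (f : T -> V) (x : T) : Prop :=
  A x /\ forall y, A y -> (f x <= f y)%O.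

End Defs.

(* Main.v *)
Require Import Defs.
From mathcomp Require Import all_boot all_order all_algebra.
From mathcomp Require Import reals.
From mathcomp.real_closed Require Import complex.
From mathcomp Require Import spectral.
From mathcomp Require Import all_classical all_analysis.

Set Implicit Arguments.
Unset Strict Implicit.
Unset Printing Implicit Defensive.
Import Order.TTheory GRing.Theory Num.Theory.
Import numFieldNormedType.Exports.
Local Open Scope ring_scope.
Local Open Scope sesquilinear_scope.
Section Alg.
Variable R : realType.
Local Notation C := R[i].
Variable d : nat.

Lemma adjM m n p (A : 'M[C]_(m, n)) (B : 'M[C]_(n, p)) :
  adj_mx (A *m B) = adj_mx B *m adj_mx A.
Proof. by rewrite /adj_mx trmx_mul map_mxM. Qed.

Lemma adjK m n (A : 'M[C]_(m, n)) : adj_mx (adj_mx A) = A.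
Proof. exact: trmxCK. Qed.

Lemma adjB m n (A B : 'M[C]_(m, n)) : adj_mx (A - B) = adj_mx A - adj_mx B.
Proof. by apply/matrixP => i j; rewrite !mxE rmorphB. Qed.

Lemma unitary_r (U : 'M[C]_d) : U \is unitarymx -> U *m adj_mx U = 1%:M.
Proof. by move/unitarymxP. Qed.

Lemma unitary_l (U : 'M[C]_d) : U \is unitarymx -> adj_mx U *m U = 1%:M.
Proof. by move=> HU; have := mulmxKtV (1%:M : 'M[C]_d) HU erefl; rewrite mul1mx. Qed.

Lemma frob2_conj (U A : 'M[C]_d) : U \is unitarymx ->
  frob2 (U *m A *m adj_mx U) = frob2 A.
Proof.
move=> HU; have HU_l := unitary_l HU; rewrite /frob2 !adjM adjK !mulmxA.
rewrite -(mulmxA _ (adj_mx U) U) HU_l mulmx1.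
by rewrite mxtrace_mulC !mulmxA HU_l mul1mx.
Qed.

Lemma frob2_sum (A : 'M[C]_d) : frob2 A = \sum_i \sum_j `|A j i| ^+ 2.
Proof.
rewrite /frob2 /mxtrace; apply: eq_bigr => i _; rewrite mxE.
by apply: eq_bigr => j _; rewrite normCK mulrC !mxE.
Qed.

Lemma frob2_ge (A : 'M[C]_d) : \sum_i `|A i i| ^+ 2 <= frob2 A.
Proof.
rewrite frob2_sum; apply: ler_sum => i _.
rewrite (bigD1 i) //= lerDl; apply: sumr_ge0 => j _; exact: exprn_ge0.
Qed.

Lemma normC_real2 (x : R) : `|x%:C%C| ^+ 2 = (x ^+ 2)%:C%C :> C.
Proof.
rewrite normCK.
have -> : (x%:C%C)^* = x%:C%C :> C by exact: conjc_real.
by rewrite rmorphXn expr2.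
Qed.

Lemma conj_real (x : R) : (x%:C%C)^* = x%:C%C :> C.
Proof. exact: conjc_real. Qed.

Lemma cdiag_adj (x : 'rV[R]_d) : adj_mx (cdiag x) = cdiag x.
Proof.
apply/matrixP => i j; rewrite !mxE.
rewrite [j == i]eq_sym; case: eqP => [->|_]; rewrite ?mulr1n ?mulr0n ?conj_real ?conjC0 //.
Qed.

Lemma cdiagB (p q : 'rV[R]_d) : cdiag p - cdiag q = cdiag (p - q).
Proof.
apply/matrixP => i j; rewrite !mxE.
by case: (i == j); rewrite ?mulr1n ?mulr0n ?rmorphB ?subr0.
Qed.

Lemma tr_cdiag (x : 'rV[R]_d) : \tr (cdiag x) = (\sum_i x 0 i)%:C%C.
Proof. by rewrite /cdiag mxtrace_diag rmorph_sum; apply: eq_bigr => i _; rewrite mxE. Qed.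

Lemma tr_cdiag2 (x : 'rV[R]_d) : \tr (cdiag x *m cdiag x) = (eucl2 x)%:C%C.
Proof.
rewrite /cdiag mulmx_diag mxtrace_diag /eucl2 rmorph_sum.
by apply: eq_bigr => i _; rewrite !mxE rmorphXn expr2.
Qed.

Lemma frob2_cdiag (x : 'rV[R]_d) : frob2 (cdiag x) = (eucl2 x)%:C%C.
Proof. by rewrite /frob2 cdiag_adj tr_cdiag2. Qed.

Lemma e_adj (i : 'I_d) : adj_mx (delta_mx 0 i : 'rV[C]_d) = delta_mx i 0.
Proof. by apply/matrixP => a b; rewrite !mxE andbC; case: (_ && _); rewrite ?conjC0 ?conjC1. Qed.

Lemma quad_e (A : 'M[C]_d) (i : 'I_d) :
  ((delta_mx 0 i : 'rV[C]_d) *m A *m adj_mx (delta_mx 0 i : 'rV[C]_d)) 0 0 = A i i.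
Proof. by rewrite e_adj -rowE -colE !mxE. Qed.

Lemma psd_conj_diag (U : 'M[C]_d) (p : 'rV[R]_d) :
  (forall i, 0 <= p 0 i) -> psd (U *m cdiag p *m adj_mx U).
Proof.
move=> p0; split.
  by rewrite /is_hermitian !adjM adjK cdiag_adj mulmxA.
move=> x; set y := x *m U.
have -> : x *m (U *m cdiag p *m adj_mx U) *m adj_mx x
        = y *m cdiag p *m adj_mx y.
  by rewrite /y adjM !mulmxA.
rewrite /cdiag mul_mx_diag !mxE; apply: sumr_ge0 => j _.
rewrite !mxE mulrAC -normCK; apply: mulr_ge0; first exact: exprn_ge0.
by rewrite lecE /= eqxx p0.

Qed.

Lemma key (U rho : 'M[C]_d) (q : 'rV[R]_d) (t : R) :
  U \is unitarymx -> St t rho ->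
  exists p, Pt t p /\ (eucl2 (p - q))%:C%C <= frob2 (rho - U *m cdiag q *m adj_mx U).
Proof.
move=> HU [[Hh Hpsd] [Htr Htr2]].
have Ul := unitary_l HU; have Ur := unitary_r HU.
set s := adj_mx U *m rho *m U.
have rhoE : rho = U *m s *m adj_mx U.
  by rewrite /s !mulmxA Ur mul1mx -mulmxA Ur mulmx1.
have sii i : 0 <= s i i.
  have := Hpsd (delta_mx 0 i *m adj_mx U).
  by rewrite adjM adjK -(quad_e s i) /s !mulmxA.
set p := \row_k complex.Re (s k k).
have sE i : s i i = (p 0 i)%:C%C.
  by rewrite [p 0 i]mxE {1}(complexE (s i i)) (ger0_Im (sii i)) mulr0 addr0.
have sh : adj_mx s = s by rewrite /s !adjM adjK Hh mulmxA.
have trs : \tr s = \tr rho.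
  by rewrite /s mxtrace_mulC mulmxA Ur mul1mx.
have trs2 : \tr (s *m s) = \tr (rho *m rho).
  rewrite /s !mulmxA -(mulmxA _ U (adj_mx U)) Ur mulmx1.
  by rewrite mxtrace_mulC !mulmxA Ur mul1mx.
exists p; split; first split.
- move=> i; have := sii i; rewrite sE lecE /= => /andP[_]; by [].
- split.
    apply: (@complexI R); rewrite rmorph_sum /= rmorph1 -Htr -trs /mxtrace.
    by apply: eq_bigr => i _; rewrite sE.
  rewrite -lecR; apply: le_trans Htr2; rewrite -trs2 -{1}sh.
  apply: le_trans (frob2_ge s); rewrite /eucl2 rmorph_sum /=.
  by apply: ler_sum => i _; rewrite sE normC_real2.
rewrite {1}rhoE -mulmxBl -mulmxBr frob2_conj //.
apply: le_trans (frob2_ge _); rewrite /eucl2 rmorph_sum /=.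
apply: ler_sum => i _; rewrite [(s - _) i i]mxE sE.
rewrite !mxE eqxx mulr1n -rmorphB normC_real2 //.
Qed.

End Alg.

Module ExM.
Local Open Scope classical_set_scope.
Section Ex.
Variable R : realType.
Variable d : nat.

Lemma sum_cont (F : 'I_d -> 'rV[R]_d -> R) :
  (forall i, continuous (F i)) -> continuous (fun x => \sum_i F i x).
Proof.
move=> H; apply: (@continuous_big _ _ +%R 0 xpredT add_continuous _ _ F).
by move=> i _; exact: H.
Qed.

Lemma coord_cont (i : 'I_d) : continuous (fun x : 'rV[R]_d => x 0 i).
Proof. exact: coord_continuous. Qed.

Lemma f_cont (q : 'rV[R]_d) : continuous (fun x : 'rV[R]_d => eucl2 (x - q)).
Proof.
rewrite /eucl2.
have -> : (fun x : 'rV[R]_d => \sum_i (x - q) 0 i ^+ 2) =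
          (fun x => \sum_i ((x 0 i - q 0 i) * (x 0 i - q 0 i))).
  by apply: funext => x; apply: eq_bigr => i _; rewrite !mxE expr2.
apply: sum_cont => i.
have gc : continuous (fun x : 'rV[R]_d => x 0 i - q 0 i).
  move=> x; have := (continuousB (@coord_cont i x) (@cst_continuous _ _ (q 0 i) x)). exact.
by move=> x; exact: (continuousM (gc x) (gc x)).
Qed.


Lemma le_sum_coord (p : 'rV[R]_d) i : (forall j, 0 <= p 0 j) -> p 0 i <= \sum_j p 0 j.
Proof.
move=> p0; rewrite (bigD1 i) //= lerDl; apply: sumr_ge0 => j _; exact: p0.
Qed.

Lemma Pt_closed (t : R) : closed [set p : 'rV[R]_d | Pt t p].
Proof.
have -> : [set p : 'rV[R]_d | Pt t p] =
  (\bigcap_(i in setT) ((fun p : 'rV[R]_d => p 0 i) @^-1` [set x | 0 <= x])) `&`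
  ((fun p : 'rV[R]_d => \sum_i p 0 i) @^-1` [set x | x = 1]) `&`
  ((fun p : 'rV[R]_d => eucl2 (p - 0)) @^-1` [set x | x <= t]).
  apply/seteqP; split => p /=.
    by move=> [H1 [H2 H3]]; rewrite subr0; split; [split => // i _; exact: H1|].
  by rewrite subr0 => -[[H1 H2] H3]; split; [move=> i; exact: H1|].
apply: closedI; first apply: closedI.
- apply: closed_bigI => i _; apply: preimage_closed; last exact: closed_ge.
  by move=> x _; exact: (@coord_cont i x).
- apply: preimage_closed; last exact: closed_eq.
  move=> x _; apply: sum_cont => i y; exact: (@coord_cont i y).
- apply: preimage_closed; last exact: closed_le.
  by move=> x _; exact: (@f_cont 0 x).
Qed.

Lemma exists_min (q : 'rV[R]_d) (t : R) : (0 < d)%N -> (d%:R)^-1 <= t ->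
  exists p, is_minimizer (@Pt R d t) (fun x => eucl2 (x - q)) p.
Proof.
move=> d0 Ht.
have dn0 : (d%:R : R) != 0 by rewrite pnatr_eq0 -lt0n.
have A0 : [set p : 'rV[R]_d | Pt t p] !=set0.
  exists (const_mx (d%:R^-1)); split; first by move=> i; rewrite mxE invr_ge0 ler0n.
  split.
    under eq_bigr do rewrite mxE.
    by rewrite sumr_const card_ord -(mulr_natr (d%:R^-1)) mulVf.
  rewrite /eucl2; under eq_bigr do rewrite mxE.
  by rewrite sumr_const card_ord -(mulr_natr (d%:R^-1 ^+ 2)) expr2 -mulrA mulVf // mulr1.
have cA : compact [set p : 'rV[R]_d | Pt t p].
  have B := @rV_compact R d (fun=> `[(0:R), 1]%classic) (fun=> @segment_compact R 0 1).
  apply: (subclosed_compact (@Pt_closed t) B).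
  move=> p [p0 [ps _]] i /=; rewrite in_itv /=; apply/andP; split; first exact: p0.
  by rewrite -ps; apply: le_sum_coord.
have [c cA' cmin] := EVT_min_rV A0 cA (continuous_subspaceT (@f_cont q)).
exists c; split; first by move: cA'; rewrite inE.
by move=> y Ay; apply: cmin; rewrite inE.
Qed.

End Ex.

End ExM.
Import ExM.

Theorem mainTheorem4 (R : realType) (d : nat) (d_gt0 : (0 < d)%N)
    (H U : 'M[R[i]]_d) (q : 'rV[R]_d) (t : R)
    (HH : is_hermitian H) (HU : U \is unitarymx)
    (Hdec : H = U *m cdiag q *m adj_mx U)
    (Ht : (d%:R)^-1 <= t) :
  (* the two minima exist and are equal *)
  (exists rho : 'M[R[i]]_d, exists p : 'rV[R]_d,
      is_minimizer (@St R d t) (fun r => frob2 (r - H)) rho /\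
      is_minimizer (@Pt R d t) (fun x => eucl2 (x - q)) p /\
      frob2 (rho - H) = ((eucl2 (p - q))%:C)%C) /\
  (* any minimizer p* of the right-hand side yields the minimizer
     U diag(p* ) U^dagger of the left-hand side *)
  (forall pstar : 'rV[R]_d,
      is_minimizer (@Pt R d t) (fun x => eucl2 (x - q)) pstar ->
      is_minimizer (@St R d t) (fun r => frob2 (r - H))
                   (U *m cdiag pstar *m adj_mx U)).
Proof.
have val : forall p : 'rV[R]_d,
    frob2 (U *m cdiag p *m adj_mx U - H) = ((eucl2 (p - q))%:C)%C.
  move=> p; rewrite Hdec -mulmxBl -mulmxBr frob2_conj // cdiagB.
  exact: frob2_cdiag.
have part2 : forall pstar : 'rV[R]_d,
      is_minimizer (@Pt R d t) (fun x => eucl2 (x - q)) pstar ->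
      is_minimizer (@St R d t) (fun r => frob2 (r - H))
                   (U *m cdiag pstar *m adj_mx U).
  move=> ps [[ps0 [ps1 ps2]] psmin]; split.
    split; first exact: psd_conj_diag.
    split.
      by rewrite mxtrace_mulC mulmxA (unitary_l HU) mul1mx tr_cdiag ps1.
    rewrite !mulmxA -(mulmxA _ (adj_mx U) U) (unitary_l HU) mulmx1.
    by rewrite mxtrace_mulC !mulmxA (unitary_l HU) mul1mx tr_cdiag2 lecR.
  move=> rho Srho; rewrite val Hdec.
  have [p [Pp le]] := key q HU Srho.
  apply: le_trans le; rewrite lecR; exact: psmin.
split=> //.
have [ps Hps] := exists_min q d_gt0 Ht.
exists (U *m cdiag ps *m adj_mx U), ps; split; first exact: part2.
by split=> //; rewrite val.
Qed.
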